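(* Let $d\ge 1$ and suppose there exists a function $f:\{0,1\}^n\to\{0,1\}$ of degree $d$ with block sensitivity $b$. Then there exist $\tau\in\{0,1\}$ and $p\in\mathbb{R}^d$ such that $$\langle p, m_d(1)\rangle = 1,\qquad 0\le \langle p, m_d(k)\rangle \le 1 \ \text{ for each } k\in\{2,\dots,b-1\},\qquad \langle p, m_d(b)\rangle = \tau,$$ where $m_d:\mathbb{R}\to\mathbb{R}^d$ is the moment map $m_d(t)=(t,t^2,\dots,t^d)$ and $\langle\cdot,\cdot\rangle$ is the standard inner product on $\mathbb{R}^d$.
   Context: The degree of $f:\{0,1\}^n\to\{0,1\}$ is the degree of the unique multilinear real polynomial agreeing with $f$ on $\{0,1\}^n$. For $x\in\{0,1\}^n$ and $B\subseteq[n]$, $x^B$ is $x$ with the bits in $B$ flipped. The block sensitivity $\mathrm{bs}(f)$ is the maximum over $x\in\{0,1\}^n$ of the largest number $m$ of pairwise disjoint sets $B_1,\dots,B_m\subseteq[n]$ with $f(x^{B_j})\neq f(x)$ for all $j$. *)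

(* Defs.v *)
From mathcomp Require Import all_boot all_order all_algebra.
From mathcomp Require Import reals.
Set Implicit Arguments. Unset Strict Implicit. Unset Printing Implicit Defensive.
Import Order.TTheory GRing.Theory Num.Theory.
Local Open Scope ring_scope.

Definition cube (n : nat) := {ffun 'I_n -> bool}.

Definition flip (n : nat) (x : cube n) (B : {set 'I_n}) : cube n :=
  [ffun i => if i \in B then ~~ x i else x i].

(* A multilinear real polynomial in n variables: coefficients c_S for S ⊆ [n],
   representing  sum_S c_S prod_{i in S} x_i. *)
Definition mlpoly (R : nzRingType) (n : nat) := {ffun {set 'I_n} -> R}.

Definition mleval (R : nzRingType) (n : nat) (P : mlpoly R n) (x : cube n) : R :=
  \sum_(S : {set 'I_n}) P S * \prod_(i in S) (x i)%:R.

(* degree of a multilinear polynomial: largest |S| with nonzero coefficient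
   (0 for the zero polynomial). *)
Definition mldeg (R : nzRingType) (n : nat) (P : mlpoly R n) : nat :=
  \max_(S : {set 'I_n} | P S != 0) #|S|.

(* f has degree d: the (unique) multilinear real polynomial agreeing with f
   on {0,1}^n has degree d. *)
Definition has_degree (R : nzRingType) (n : nat) (f : cube n -> bool) (d : nat) : Prop :=
  exists P : mlpoly R n, (forall x, mleval P x = (f x)%:R) /\ mldeg P = d.

Definition sens_blocks (n : nat) (f : cube n -> bool) (x : cube n)
  (F : {set {set 'I_n}}) : bool :=
  [forall B in F, f (flip x B) != f x] &&
  [forall B in F, forall C in F, (B != C) ==> [disjoint B & C]].

Definition bs_at (n : nat) (f : cube n -> bool) (x : cube n) : nat :=
  \max_(F : {set {set 'I_n}} | sens_blocks f x F) #|F|.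

Definition bs (n : nat) (f : cube n -> bool) : nat :=
  \max_(x : cube n) bs_at f x.

Definition moment (R : nzRingType) (d : nat) (t : R) : 'rV[R]_d :=
  \row_(i < d) t ^+ i.+1.

Definition inner (R : nzRingType) (d : nat) (u v : 'rV[R]_d) : R :=
  \sum_(i < d) u 0 i * v 0 i.

(* Main.v *)
Require Import Defs.
From mathcomp Require Import all_boot all_order all_algebra.
From mathcomp Require Import reals.
From mathcomp Require Import ring lra zify.
Set Implicit Arguments. Unset Strict Implicit. Unset Printing Implicit Defensive.
Import Order.TTheory GRing.Theory Num.Theory.

Lemma bin_id b j k : j <= k -> 'C(b - j, k - j) * 'C(b, j) = 'C(b, k) * 'C(k, j).
Proof.
move=> jk.
have [kb|bk] := leqP k b; last first.
  rewrite (bin_small bk) mul0n.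
  have [jb|bj] := leqP j b; last by rewrite (bin_small bj) muln0.
  rewrite (@bin_small (b - j) (k - j)) ?mul0n //. lia.
have H1 := @bin_fact (b - j) (k - j) ltac:(lia).
have e : b - j - (k - j) = b - k by lia.
rewrite e in H1.
have H2 := @bin_fact b j ltac:(lia).
have H3 := bin_fact kb.
have H4 := bin_fact jk.
have Mp : 0 < j`! * ((k - j)`! * (b - k)`!) by rewrite !muln_gt0 !fact_gt0.
apply/eqP; rewrite -(eqn_pmul2r Mp); apply/eqP.
transitivity (('C(b - j, k - j) * ((k - j)`! * (b - k)`!)) * ('C(b, j) * j`!)); first ring.
rewrite H1.
transitivity ('C(b, j) * (j`! * (b - j)`!)); first ring.
rewrite H2 -H3 -H4; ring.
Qed.

Lemma count_sup (X : finType) (E J : {set X}) k : J \subset E ->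
  #|[set T : {set X} | [&& T \subset E, #|T| == k & J \subset T]]| * 'C(#|E|, #|J|)
  = 'C(#|E|, k) * 'C(k, #|J|).
Proof.
move=> JE.
have [jk|kj] := leqP #|J| k; last first.
  rewrite (bin_small kj) muln0.
  suff -> : [set T : {set X} | [&& T \subset E, #|T| == k & J \subset T]] = set0
    by rewrite cards0.
  apply/setP => T; rewrite !inE; apply/negP => /and3P[_ /eqP Tk JT].
  by have := subset_leq_card JT; rewrite Tk leqNgt kj.
have eE : #|E :\: J| = #|E| - #|J| by rewrite cardsD (setIidPr JE).
rewrite -(bin_id _ jk) -eE.
congr (_ * _).
have -> : [set T : {set X} | [&& T \subset E, #|T| == k & J \subset T]]
   = (fun T' => T' :|: J) @: [set T' : {set X} | T' \subset E :\: J & #|T'| == k - #|J|].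
  apply/setP => T; rewrite inE; apply/idP/imsetP.
  - case/and3P => TE /eqP Tk JT; exists (T :\: J); last first.
      apply/setP => i; rewrite !inE; case iJ: (i \in J); rewrite ?orbF ?orbT //=.
      by rewrite (subsetP JT).
    rewrite inE setSD //= cardsD (setIidPr JT) Tk.
    done.
  - case=> T'; rewrite inE => /andP[T'E /eqP T'k] ->.
    have dis : T' :&: J = set0.
      apply/setP => i; rewrite !inE; apply/negP => /andP[iT iJ].
      by have := subsetP T'E i iT; rewrite !inE iJ.
    rewrite subsetUr andbT cardsU dis cards0 subn0 T'k subnK //.
    rewrite subUset JE eqxx !andbT; by apply/subsetP => i /(subsetP T'E); rewrite inE => /andP[].
rewrite card_in_imset ?cards_draws // => A B; rewrite !inE => /andP[AE _] /andP[BE _] eAB.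
have dA : A :&: J = set0.
  apply/setP => i; rewrite !inE; apply/negP => /andP[iT iJ].
  by have := subsetP AE i iT; rewrite !inE iJ.
have dB : B :&: J = set0.
  apply/setP => i; rewrite !inE; apply/negP => /andP[iT iJ].
  by have := subsetP BE i iT; rewrite !inE iJ.
apply/setP => i; have := congr1 (fun S : {set X} => i \in S) eAB; rewrite /= !inE.
case iJ: (i \in J); last by rewrite !orbF.
have : i \notin A :&: J by rewrite dA inE.
have : i \notin B :&: J by rewrite dB inE.
by rewrite !inE iJ !andbT => /negbTE -> /negbTE ->.
Qed.

Local Open Scope ring_scope.

Section Poly.
Variable R : realType.

Definition fpoly (j : nat) : {poly R} := \prod_(i < j) ('X - (i%:R)%:P).

Lemma size_fpoly j : size (fpoly j) = j.+1.
Proof. by rewrite /fpoly -(big_map (fun i : 'I_j => i%:R) xpredT (fun a => 'X - a%:P)) size_prod_XsubC size_map /index_enum -enumT size_enum_ord. Qed.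

Lemma fpolyE j (k : nat) : (fpoly j).[k%:R] = (k ^_ j)%:R.
Proof.
elim: j => [|j IH]; first by rewrite /fpoly big_ord0 hornerC.
rewrite /fpoly big_ord_recr /= hornerM -/(fpoly j) IH hornerXsubC ffactnSr.
have [jk|kj] := leqP j k; first by rewrite natrM natrB.
by rewrite ffact_small // !mul0r.
Qed.

Lemma inner_poly (d : nat) (r : {poly R}) (t : R) :
  (size r <= d.+1)%N -> r.[0] = 0 -> inner (\row_(i < d) r`_i.+1) (moment d t) = r.[t].
Proof.
move=> sr r0; rewrite (horner_coef_wide t sr) big_ord_recl -horner_coef0 r0 mul0r add0r.
by apply: eq_bigr => i _; rewrite !mxE.
Qed.

End Poly.

Section Main.
Variable R : realType.
Variables (n : nat) (x : cube n) (F : {set {set 'I_n}}).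
Hypothesis disj : forall B C, B \in F -> C \in F -> B != C -> [disjoint B & C].

Definition U (T : {set {set 'I_n}}) : {set 'I_n} := \bigcup_(B in T) B.
Definition zz (T : {set {set 'I_n}}) := flip x (U T).
Definition DD k := [set T : {set {set 'I_n}} | T \subset F & #|T| == k].
Definition blk (i : 'I_n) : {set 'I_n} := odflt set0 [pick B in F | i \in B].

Lemma blkP i B : B \in F -> i \in B -> blk i = B.
Proof.
move=> BF iB; rewrite /blk; case: pickP => [C /andP[CF iC] | none] /=.
  apply/eqP; apply: contraT => CB.
  by have := disjointFr (disj CF BF CB) iC; rewrite iB.
by have := none B; rewrite BF iB.
Qed.

Lemma subU_iff (A : {set 'I_n}) (T : {set {set 'I_n}}) : T \subset F ->
  (A \subset U T) = (A \subset U F) && (blk @: A \subset T).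
Proof.
move=> TF; apply/idP/andP.
  move=> AU; split.
    apply/subsetP => i /(subsetP AU) /bigcupP [B BT iB].
    by apply/bigcupP; exists B => //; apply: (subsetP TF).
  apply/subsetP => C /imsetP [i iA ->].
  have /bigcupP [B BT iB] := subsetP AU i iA.
  by rewrite (blkP (subsetP TF B BT) iB).
case=> AUF bT; apply/subsetP => i iA.
have /bigcupP [B BF iB] := subsetP AUF i iA.
apply/bigcupP; exists B => //.
by rewrite -(blkP BF iB); apply: (subsetP bT); apply: imset_f.
Qed.

Lemma blk_sub (A : {set 'I_n}) : A \subset U F -> blk @: A \subset F.
Proof.
move=> AUF; apply/subsetP => C /imsetP [i iA ->].
have /bigcupP [B BF iB] := subsetP AUF i iA.
by rewrite (blkP BF iB).
Qed.

Lemma sum_subU (A : {set 'I_n}) k :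
  \sum_(T in DD k) ((A \subset U T)%:R : R) =
  (A \subset U F)%:R * (#|[set T : {set {set 'I_n}} | [&& T \subset F, #|T| == k & blk @: A \subset T]]|)%:R.
Proof.
case AUF: (A \subset U F); last first.
  rewrite mul0r; apply: big1 => T; rewrite inE => /andP[TF _].
  by rewrite subU_iff // AUF.
rewrite mul1r -sumr_const big_mkcond [RHS]big_mkcond /=; apply: eq_bigr => T _.
rewrite !inE; case TF: (T \subset F) => /=; last by [].
by rewrite subU_iff // AUF /=; case: (#|T| == k); case: (blk @: A \subset T).
Qed.

Definition al (S : {set 'I_n}) i : R := if i \in S then ((x i : nat)%:R) else 1.
Definition be (S : {set 'I_n}) i : R := if i \in S then 1 - 2%:R * ((x i : nat)%:R) else 0.
Definition ww (S J : {set 'I_n}) : R := \prod_i (if i \in J then be S i else al S i).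

Lemma prod_expand (S : {set 'I_n}) (T : {set {set 'I_n}}) :
  \prod_(i in S) ((zz T i : nat)%:R : R) = \sum_(J : {set 'I_n}) ww S J * (J \subset U T)%:R.
Proof.
rewrite big_mkcond /=.
transitivity (\prod_i (be S i * ((i \in U T) : nat)%:R + al S i)).
  apply: eq_bigr => i _; rewrite /al /be /zz /flip ffunE.
  case: (i \in S); last by rewrite mul0r add0r.
  by case: (i \in U T); case: (x i) => /=; rewrite ?mulr0 ?mulr1 ?addr0; ring.
rewrite bigA_distr; apply: eq_bigr => J _.
have -> : ((J \subset U T) : nat)%:R = \prod_i (if i \in J then ((i \in U T) : nat)%:R else 1 : R).
  case: (boolP (J \subset U T)) => h.
    by rewrite big1 // => i _; case: ifP => // iJ; rewrite (subsetP h i iJ).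
  case/subsetPn: h => i iJ iU.
  by rewrite (bigD1 i) //= iJ (negbTE iU) mul0r.
rewrite /ww -big_split /=; apply: eq_bigr => i _.
by case: (i \in J); rewrite ?mulr1.
Qed.

Definition jj (J : {set 'I_n}) := #|blk @: J|.
Definition rS (S : {set 'I_n}) : {poly R} :=
  \sum_(J : {set 'I_n}) (ww S J * ((J \subset U F) : nat)%:R / ('C(#|F|, jj J) * (jj J)`!)%:R) *: fpoly R (jj J).

Lemma key (S : {set 'I_n}) k :
  \sum_(T in DD k) \prod_(i in S) ((zz T i : nat)%:R : R) = ('C(#|F|, k))%:R * (rS S).[k%:R].
Proof.
under eq_bigr do rewrite prod_expand.
rewrite exchange_big /= horner_sum mulr_sumr; apply: eq_bigr => J _.
rewrite -mulr_sumr sum_subU hornerZ fpolyE.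
case AUF: (J \subset U F); last by rewrite !mul0r !mulr0 !mul0r mulr0.
have jb : (jj J <= #|F|)%N by apply: subset_leq_card; apply: blk_sub.
have cnt := count_sup k (blk_sub AUF).
rewrite -bin_ffact /jj.
set N := #|_|.
have Cb : ('C(#|F|, #|blk @: J|)%:R : R) != 0 by rewrite pnatr_eq0 -lt0n bin_gt0.
have Fj : ((#|blk @: J|)`!%:R : R) != 0 by rewrite pnatr_eq0 -lt0n fact_gt0.
have NE : (N%:R : R) = 'C(#|F|, k)%:R * 'C(k, #|blk @: J|)%:R / 'C(#|F|, #|blk @: J|)%:R.
  by rewrite -!natrM -cnt natrM mulfK.
rewrite NE !natrM; field.
by rewrite Cb Fj.
Qed.

Lemma size_rS (S : {set 'I_n}) d : (#|S| <= d)%N -> (size (rS S) <= d.+1)%N.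
Proof.
move=> Sd; rewrite /rS; apply: (big_ind (fun p : {poly R} => (size p <= d.+1)%N)).
- by rewrite size_poly0.
- by move=> p q sp sq; apply: leq_trans (size_add _ _) _; rewrite geq_max sp sq.
move=> J _; case: (boolP (J \subset S)) => JS.
  apply: leq_trans (size_scale_leq _ _) _; rewrite size_fpoly ltnS /jj.
  apply: leq_trans (leq_imset_card _ _) _; apply: leq_trans Sd.
  exact: subset_leq_card.
case/subsetPn: JS => i iJ iS.
have -> : ww S J = 0 by rewrite /ww (bigD1 i) //= iJ /be (negbTE iS) mul0r.
by rewrite !mul0r scale0r size_poly0.
Qed.

Lemma U0 : U set0 = set0.
Proof. by rewrite /U big_set0. Qed.

Lemma zz0 : zz set0 = x.
Proof. by apply/ffunP => i; rewrite /zz /flip ffunE U0 in_set0. Qed.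

Lemma zz1 B : zz [set B] = flip x B.
Proof. by rewrite /zz /U big_set1. Qed.

End Main.

Theorem proposition9 (R : realType) (n d b : nat) (f : cube n -> bool) :
  (1 <= d)%N -> has_degree R f d -> bs f = b ->
  exists (tau : bool) (p : 'rV[R]_d),
    [/\ inner p (moment d 1) = 1,
        (forall k : nat, (2 <= k <= b.-1)%N ->
           0 <= inner p (moment d k%:R) <= 1)
      & inner p (moment d b%:R) = tau%:R].
Proof.
move=> d1 [P [HP Pdeg]] bsb.
have degS : forall S, P S != 0 -> (#|S| <= d)%N.
  by move=> S PS; rewrite -Pdeg; apply: (leq_bigmax_cond S PS).
have [b0|bpos] := posnP b.
  exists false, (\row_(i < d) ('X : {poly R})`_i.+1).
  rewrite !inner_poly ?size_polyX ?hornerX ?ltnS //; split => //.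
    by move=> k; rewrite b0 /=; lia.
  by rewrite b0.
have [x0 Hx] : {x0 : cube n | bs f = bs_at f x0}.
  rewrite /bs; apply: (@bigop.eq_bigmax {ffun 'I_n -> bool}); apply/card_gt0P; by exists [ffun=> false].
have s0 : sens_blocks f x0 set0.
  by apply/andP; split; apply/forall_inP => B; rewrite in_set0.
have [F0 sF0 eF0] : exists2 F0, sens_blocks f x0 F0 & #|F0| = b.
  rewrite -bsb Hx /bs_at (bigop.bigmax_eq_arg set0 s0).
  by case: arg_maxnP => // F0 sF0 _; exists F0.
move: sF0 => /andP[/forall_inP sens /forall_inP dF].
have disj : forall B C, B \in F0 -> C \in F0 -> B != C -> [disjoint B & C].
  move=> B C BF CF BC; exact: (implyP (forall_inP (dF B BF) C CF) BC).
pose h T : R := ((f (zz x0 T) != f x0) : nat)%:R.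
pose q : {poly R} := \sum_S P S *: rS R x0 F0 S.
pose r := if f x0 then 1 - q else q.
have cD k : #|DD F0 k| = 'C(b, k) by rewrite /DD cards_draws eF0.
have sumE : forall k, \sum_(T in DD F0 k) h T = 'C(b, k)%:R * r.[k%:R].
  move=> k.
  have mlE : \sum_(T in DD F0 k) mleval P (zz x0 T) = 'C(b, k)%:R * q.[k%:R].
    rewrite /mleval exchange_big /= /q horner_sum mulr_sumr; apply: eq_bigr => S _.
    by rewrite -mulr_sumr key // hornerZ -eF0 mulrCA.
  rewrite /h /r; case fx: (f x0).
    transitivity (\sum_(T in DD F0 k) (1 - mleval P (zz x0 T))).
      by apply: eq_bigr => T _; rewrite HP; case: (f (zz x0 T)); rewrite ?subrr ?subr0.
    by rewrite sumrB mlE sumr_const cD hornerD hornerN hornerC mulrBr mulr1.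
  rewrite -mlE; apply: eq_bigr => T _; rewrite HP; by case: (f (zz x0 T)).
have sr : (size r <= d.+1)%N.
  have sq : (size q <= d.+1)%N.
    rewrite /q; apply: (big_ind (fun p : {poly R} => (size p <= d.+1)%N)).
    - by rewrite size_poly0.
    - by move=> p1 q1 sp sq; apply: leq_trans (size_add _ _) _; rewrite geq_max sp sq.
    move=> S _; have [->|PS] := eqVneq (P S) 0; first by rewrite scale0r size_poly0.
    apply: leq_trans (size_scale_leq _ _) _; exact: size_rS (degS S PS).
  rewrite /r; case: (f x0) => //.
  by apply: leq_trans (size_add _ _) _; rewrite size_opp geq_max sq size_poly1.
have Cnz k : (k <= b)%N -> ('C(b, k)%:R : R) != 0 by move=> kb; rewrite pnatr_eq0 -lt0n bin_gt0.
have r0 : r.[0] = 0.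
  have := sumE 0%N; rewrite big1 ?bin0 ?mul1r //.
  by move=> T; rewrite inE => /andP[_ /eqP/cards0_eq ->]; rewrite /h zz0 eqxx.
have r1 : r.[1] = 1.
  have := sumE 1%N; rewrite (eq_bigr (fun _ => 1)) ?sumr_const ?cD.
    by rewrite -{1}['C(b, 1)%:R]mulr1 => /(mulfI (Cnz 1%N bpos)) <-.
  move=> T; rewrite inE => /andP[TF /cards1P [B eT]]; rewrite eT in TF *.
  have BF : B \in F0 by apply: (subsetP TF); rewrite in_set1.
  by rewrite /h zz1 (sens B BF).
have rk : forall k, (k <= b)%N -> 0 <= r.[k%:R] <= 1.
  move=> k kb; have e := sumE k.
  have Cp : (0 : R) < 'C(b, k)%:R by rewrite ltr0n bin_gt0.
  have t0 : 0 <= \sum_(T in DD F0 k) h T by apply: sumr_ge0 => T _; rewrite /h ler0n.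
  have s1 : \sum_(T in DD F0 k) h T <= 'C(b, k)%:R.
    rewrite -cD -sumr_const; apply: ler_sum => T _; rewrite /h.
    by case: (f (zz x0 T) != f x0); rewrite ?ler01 ?lexx.
  rewrite e in t0 s1; apply/andP; split.
    by rewrite -(pmulr_rge0 _ Cp).
  by rewrite -(ler_pM2l Cp) mulr1.
have rb : r.[b%:R] = (f (zz x0 F0) != f x0)%:R.
  have := sumE b; rewrite (big_pred1 F0) ?binn ?mul1r //.
  move=> T; rewrite /= inE eqEcard eF0; case TF: (T \subset F0) => //=.
  by rewrite eqn_leq -eF0 (subset_leq_card TF).
exists (f (zz x0 F0) != f x0), (\row_(i < d) r`_i.+1).
rewrite !inner_poly //; split => //.
move=> k /andP[k2 kb]; rewrite inner_poly //; apply: rk; lia.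
Qed.
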